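(* For $n=4$, the row span $[C]$ of the cyclic matrix $C$ is the unique minimizer of $E$ on $Gr^{>0}(2,4)$.
   Context: For a real $2\times n$ matrix $X$ and $1\le i<j\le n$, $\Delta_{i,j}(X)$ is the determinant of the $2\times2$ submatrix of columns $i,j$. $Gr^{>0}(2,n)$ is the set of 2-dimensional subspaces of $\mathbb{R}^n$ having a spanning $2\times n$ matrix $X$ (rows spanning the subspace) with $\Delta_{i,j}(X)>0$ for all $i<j$; $E(x)=\max_{i<j}\Delta_{i,j}(X)/\min_{i<j}\Delta_{i,j}(X)$. The cyclic matrix $C$ is the $2\times n$ matrix whose $m$-th column is $(\cos((m-1)\pi/n),\sin((m-1)\pi/n))^T$, $m=1,\dots,n$. *)

(* Defs.v *)
From HB Require Import structures.
From mathcomp Require Import all_boot all_order all_algebra.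
From mathcomp Require Import all_classical all_reals all_analysis.
Set Implicit Arguments. Unset Strict Implicit. Unset Printing Implicit Defensive.
Import Order.TTheory GRing.Theory Num.Theory.
Local Open Scope ring_scope.

Definition Delta (R : realType) (n : nat) (X : 'M[R]_(2, n)) (i j : 'I_n) : R :=
  X 0 i * X 1 j - X 0 j * X 1 i.

Definition totally_positive (R : realType) (n : nat) (X : 'M[R]_(2, n)) : Prop :=
  forall i j : 'I_n, (i < j)%N -> 0 < Delta X i j.

(* Max / min of Delta_{i,j} over i<j (n = 4; the pair (0,1) serves as seed,
   it belongs to the index set). *)
Definition maxDelta4 (R : realType) (X : 'M[R]_(2, 4)) : R :=
  \big[Num.max/Delta X 0 1]_(p : 'I_4 * 'I_4 | (p.1 < p.2)%N) Delta X p.1 p.2.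
Definition minDelta4 (R : realType) (X : 'M[R]_(2, 4)) : R :=
  \big[Num.min/Delta X 0 1]_(p : 'I_4 * 'I_4 | (p.1 < p.2)%N) Delta X p.1 p.2.

(* E(x) computed from a totally positive representative X of x. *)
Definition E4 (R : realType) (X : 'M[R]_(2, 4)) : R := maxDelta4 X / minDelta4 X.

Definition cyclicC (R : realType) (n : nat) : 'M[R]_(2, n) :=
  \matrix_(i < 2, m < n)
    (if i == 0 then cos (m%:R * pi / n%:R) else sin (m%:R * pi / n%:R)).

(* Main.v *)
Require Import Defs.
From HB Require Import structures.
From mathcomp Require Import all_boot all_order all_algebra.
From mathcomp Require Import all_classical all_reals all_analysis.
From mathcomp Require Import ring lra.
Import Order.TTheory GRing.Theory Num.Theory.
Local Open Scope ring_scope.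

Lemma pairs4 (P : 'I_4 -> 'I_4 -> Prop) : P 0 1 -> P 0 2 -> P 0 3 -> P 1 2 -> P 1 3 -> P 2 3 ->
  forall i j : 'I_4, (i < j)%N -> P i j.
Proof.
move=> H01 H02 H03 H12 H13 H23.
case=> [[|[|[|[|i]]]] Hi] [[|[|[|[|j]]]] Hj] //= _;
  match goal with |- P ?a ?b => first
  [ have -> : a = 0 by apply: val_inj | have -> : a = 1 by apply: val_inj
  | have -> : a = 2 by apply: val_inj ];
  first [ have -> : b = 1 by apply: val_inj | have -> : b = 2 by apply: val_inj
  | have -> : b = 3 by apply: val_inj ] end; assumption.
Qed.

Section S.
Context {R : realType}.

Let s : R := sin (pi / 4%:R).

Lemma s_facts : 0 < s /\ cos (pi / 4%:R) = s /\ 2 * s ^+ 2 = 1.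
Proof.
have pi0 : 0 < (pi : R) := pi_gt0 R.
have hs : 0 < s by apply: sin_gt0_pihalf; apply/andP; split; lra.
have hc : 0 < cos (pi / 4%:R) :> R by apply: cos_gt0_pihalf; apply/andP; split; lra.
have e : pi / 2 = (pi / 4%:R) *+ 2 :> R by rewrite mulr2n; field.
have h1 := cos_pihalf R; have h2 := sin_pihalf R.
rewrite e cos_mulr2n in h1; rewrite e sin_mulr2n in h2.
rewrite -/s in h1 h2 hs.
have h3 : cos (pi / 4%:R) ^+ 2 = s ^+ 2.
  by have := cos2Dsin2 (pi / 4%:R); rewrite -/s; nra.
have hcs : cos (pi / 4%:R) = s.
  by apply/eqP; rewrite -(@eqrXn2 _ 2) //; [apply/eqP | lra | lra].
split=> //; split=> //. rewrite hcs in h2; nra.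
Qed.

Let C := cyclicC R 4.
Lemma C0 (m : 'I_4) : C 0 m = cos (m%:R * pi / 4%:R).
Proof. by rewrite /C /cyclicC mxE. Qed.
Lemma C1 (m : 'I_4) : C 1 m = sin (m%:R * pi / 4%:R).
Proof. by rewrite /C /cyclicC mxE. Qed.

Lemma Cvals : C 0 0 = 1 /\ C 1 0 = 0 /\ C 0 1 = s /\ C 1 1 = s /\
   C 0 2 = 0 /\ C 1 2 = 1 /\ C 0 3 = - s /\ C 1 3 = s.
Proof.
have [_ [hc _]] := s_facts.
have e0 : nat_of_ord (0 : 'I_4) = 0%N by [].
have e1 : nat_of_ord (1 : 'I_4) = 1%N by [].
have e2 : nat_of_ord (2 : 'I_4) = 2%N by [].
have e3 : nat_of_ord (3 : 'I_4) = 3%N by [].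
have a2 : 2%:R * pi / 4%:R = pi / 2 :> R by field.
have a3 : 3%:R * pi / 4%:R = pi / 4%:R + pi / 2 :> R by field.
rewrite !C0 !C1 e0 e1 e2 e3 mul0r mul0r cos0 sin0 mul1r a2 a3 cos_pihalf sin_pihalf.
by rewrite cosDpihalf sinDpihalf hc; do !split.
Qed.

Lemma CDelta : Delta C 0 1 = s /\ Delta C 0 2 = 1 /\ Delta C 0 3 = s /\
   Delta C 1 2 = s /\ Delta C 1 3 = 1 /\ Delta C 2 3 = s.
Proof.
have [hs [hc h2]] := s_facts.
have [c00 [c10 [c01 [c11 [c02 [c12 [c03 c13]]]]]]] := Cvals.
rewrite /Delta c00 c10 c01 c11 c02 c12 c03 c13; do !split; nra.
Qed.
End S.

Section G.
Context {R : realType}.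
Implicit Type X : 'M[R]_(2, 4).

Lemma max_ge X (i j : 'I_4) : (i < j)%N -> Delta X i j <= maxDelta4 X.
Proof. by move=> h; rewrite /maxDelta4 (bigD1 (i, j)) //= le_max lexx. Qed.
Lemma min_le X (i j : 'I_4) : (i < j)%N -> minDelta4 X <= Delta X i j.
Proof. by move=> h; rewrite /minDelta4 (bigD1 (i, j)) //= ge_min lexx. Qed.

Lemma max_in X : exists i j : 'I_4, (i < j)%N /\ maxDelta4 X = Delta X i j.
Proof.
rewrite /maxDelta4; apply: (big_ind (fun v => exists i j : 'I_4, (i < j)%N /\ v = Delta X i j)).
- by exists 0, 1.
- move=> x y [i [j [h ->]]] [k [l [h' ->]]].
  by case: ltP => _; [exists k, l | exists i, j].
- by move=> [a b] /= h; exists a, b.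
Qed.
Lemma min_in X : exists i j : 'I_4, (i < j)%N /\ minDelta4 X = Delta X i j.
Proof.
rewrite /minDelta4; apply: (big_ind (fun v => exists i j : 'I_4, (i < j)%N /\ v = Delta X i j)).
- by exists 0, 1.
- move=> x y [i [j [h ->]]] [k [l [h' ->]]].
  by case: ltP => _; [exists i, j | exists k, l].
- by move=> [a b] /= h; exists a, b.
Qed.
End G.

Lemma det2 (R : comRingType) (A : 'M[R]_2) : \det A = A 0 0 * A 1 1 - A 0 1 * A 1 0.
Proof.
rewrite (expand_det_row _ 0) !big_ord_recl big_ord0 /cofactor !det_mx11 !mxE /=.
have e1 : lift (0 : 'I_2) (0 : 'I_1) = 1 by apply: val_inj.
have e2 : lift (ord0 : 'I_2) (ord0 : 'I_1) = 1 by apply: val_inj.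
have e3 : lift (1 : 'I_2) (0 : 'I_1) = 0 by apply: val_inj.
have e4 : (ord0 : 'I_2) = 0 by apply: val_inj.
rewrite ?e1 ?e2 ?e3 ?e4 /bump /=. ring.
Qed.

Lemma ord4_case (P : 'I_4 -> Prop) : P 0 -> P 1 -> P 2 -> P 3 -> forall j, P j.
Proof.
move=> h0 h1 h2 h3; case=> [[|[|[|[|j]]]] Hj] //;
  match goal with |- P ?a => first
  [ have -> : a = 0 by apply: val_inj | have -> : a = 1 by apply: val_inj
  | have -> : a = 2 by apply: val_inj | have -> : a = 3 by apply: val_inj ] end; assumption.
Qed.
Lemma ord2_case (P : 'I_2 -> Prop) : P 0 -> P 1 -> forall j, P j.
Proof.
move=> h0 h1; case=> [[|[|j]] Hj] //;
  match goal with |- P ?a => first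
  [ have -> : a = 0 by apply: val_inj | have -> : a = 1 by apply: val_inj ] end; assumption.
Qed.

Lemma upper_eq (R : realType) (b e M : R) : 0 < b -> 0 < e -> b <= M -> e <= M ->
  b * e = M * M -> b = M /\ e = M.
Proof. move=> *; split; nra. Qed.
Lemma lower_eq (R : realType) (m a f : R) : 0 < m -> m <= a -> m <= f ->
  a * f = m * m -> a = m /\ f = m.
Proof. move=> *; split; nra. Qed.

Theorem mainTheorem4 (R : realType) :
  totally_positive (cyclicC R 4) /\
  (forall X : 'M[R]_(2, 4), totally_positive X ->
     E4 (cyclicC R 4) <= E4 X /\
     (E4 X = E4 (cyclicC R 4) -> (X == cyclicC R 4)%MS)).
Proof.
set s : R := sin (pi / 4%:R).
have [hs [hc h2]] := @s_facts R; rewrite -/s in hs hc h2.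
have [d01 [d02 [d03 [d12 [d13 d23]]]]] := @CDelta R; rewrite -/s in d01 d02 d03 d12 d13 d23.
have s1 : s < 1 by nra.
have tpC : totally_positive (cyclicC R 4).
  by apply: pairs4; rewrite ?d01 ?d02 ?d03 ?d12 ?d13 ?d23 //; lra.
have maxC : maxDelta4 (cyclicC R 4) = 1.
  apply/le_anti; apply/andP; split; last by rewrite -{1}d02; exact: (max_ge _ (0:'I_4) (2:'I_4)).
  have [i [j [hij ->]]] := max_in (cyclicC R 4).
  move: i j hij; apply: pairs4; rewrite ?d01 ?d02 ?d03 ?d12 ?d13 ?d23; lra.
have minC : minDelta4 (cyclicC R 4) = s.
  apply/le_anti; apply/andP; split; first by rewrite -d01; exact: (min_le _ (0:'I_4) (1:'I_4)).
  have [i [j [hij ->]]] := min_in (cyclicC R 4).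
  move: i j hij; apply: pairs4; rewrite ?d01 ?d02 ?d03 ?d12 ?d13 ?d23; lra.
have EC : E4 (cyclicC R 4) = 1 / s by rewrite /E4 maxC minC.
split=> // X tpX.
set M := maxDelta4 X; set m := minDelta4 X.
have m0 : 0 < m.
  rewrite /m; have [i [j [hij ->]]] := min_in X; exact: tpX.
have pl : Delta X 0 2 * Delta X 1 3 = Delta X 0 1 * Delta X 2 3 + Delta X 0 3 * Delta X 1 2.
  rewrite /Delta; ring.
have p01 := tpX 0 1 isT; have p02 := tpX 0 2 isT; have p03 := tpX 0 3 isT.
have p12 := tpX 1 2 isT; have p13 := tpX 1 3 isT; have p23 := tpX 2 3 isT.
have M02 : Delta X 0 2 <= M by exact: (max_ge _ (0:'I_4) (2:'I_4)).
have M13 : Delta X 1 3 <= M by exact: (max_ge _ (1:'I_4) (3:'I_4)).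
have m01 : m <= Delta X 0 1 by exact: (min_le _ (0:'I_4) (1:'I_4)).
have m03 : m <= Delta X 0 3 by exact: (min_le _ (0:'I_4) (3:'I_4)).
have m12 : m <= Delta X 1 2 by exact: (min_le _ (1:'I_4) (2:'I_4)).
have m23 : m <= Delta X 2 3 by exact: (min_le _ (2:'I_4) (3:'I_4)).
have M0 : 0 < M by lra.
have hA : Delta X 0 2 * Delta X 1 3 <= M * M.
  by apply: ler_pM; lra.
have hB : m * m <= Delta X 0 1 * Delta X 2 3 by apply: ler_pM; lra.
have hB' : m * m <= Delta X 0 3 * Delta X 1 2 by apply: ler_pM; lra.
have hM2 : 2 * (m * m) <= M * M by lra.
have hsq : m * m <= (M * s) * (M * s).
  have -> : (M * s) * (M * s) = (M * M) * (2 * s ^+ 2) / 2 by field.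
  rewrite h2; lra.
have ineq : m <= M * s.
  have Ms0 : 0 < M * s by apply: mulr_gt0.
  rewrite leNgt; apply/negP => H.
  have : (M * s) * (M * s) < m * m by apply: ltr_pM; lra.
  lra.
split.
  rewrite EC /E4 -/M -/m ler_pdivlMr // mul1r mulrC ler_pdivrMr //.
move=> hE; rewrite EC /E4 -/M -/m in hE.
have hMs : M * s = m.
  move/eqP: hE; rewrite eqr_div; [by rewrite mul1r => /eqP| by apply: lt0r_neq0 | by apply: lt0r_neq0].
have hMM : M * M = 2 * (m * m).
  rewrite -hMs; transitivity (M * M * (2 * s ^+ 2)); [by rewrite h2 mulr1 | ring].
have q1 : Delta X 0 2 * Delta X 1 3 = M * M by lra.
have q2 : Delta X 0 1 * Delta X 2 3 = m * m by lra.
have q3 : Delta X 0 3 * Delta X 1 2 = m * m by lra.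
have [e02 e13] := @upper_eq R _ _ _ p02 p13 M02 M13 q1.
have [e01 e23] := @lower_eq R _ _ _ m0 m01 m23 q2.
have [e03 e12] := @lower_eq R _ _ _ m0 m03 m12 q3.
clear q1 q2 q3 hA hB hB' hsq hM2 pl.
set A : 'M[R]_2 := \matrix_(i < 2, k < 2) X i (if k == 0 then 0 else 2).
have hX : X = A *m cyclicC R 4.
  apply/matrixP => i j; rewrite !mxE !big_ord_recl big_ord0 !mxE /=.
  rewrite -C0 -C1; move: i j.
  have cr : forall i : 'I_2, Delta X 0 2 * X i 1 = Delta X 1 2 * X i 0 + Delta X 0 1 * X i 2 /\
      Delta X 0 2 * X i 3 = - Delta X 2 3 * X i 0 + Delta X 0 3 * X i 2.
    by apply: ord2_case; rewrite /Delta; split; ring.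
  have [c00 [c10 [c01 [c11 [c02 [c12 [c03 c13]]]]]]] := @Cvals R.
  rewrite -/s in c00 c10 c01 c11 c02 c12 c03 c13.
  have Mn : M != 0 by apply: lt0r_neq0.
  move=> i; have [cr1 cr3] := cr i; rewrite e02 e12 e01 e23 e03 -hMs in cr1 cr3.
  apply: ord4_case; rewrite ?c00 ?c10 ?c01 ?c11 ?c02 ?c12 ?c03 ?c13.
  - lra.
  - apply: (mulfI Mn); rewrite cr1; ring.
  - lra.
  - apply: (mulfI Mn); rewrite cr3; ring.
rewrite hX; apply/eqmxP; apply: eqmxMfull.
rewrite row_full_unit unitmxE unitfE det2 !mxE /=.
have := e02; rewrite /Delta => ->; exact: lt0r_neq0.
Qed.
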